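(* Let $I$ be a nearly complete intersection in $R=k[x_1,\dots,x_n]$, let $h$ be a minimal monomial generator of $I$ of degree at least $3$, and let $K$ be the ideal generated by the remaining minimal monomial generators of $I$, so $I=(h)+K$. Then $(h)\cap K=hJ$ for some ideal $J$ that is a complete intersection.
   Context: $k$ is a field. A nearly complete intersection is a squarefree monomial ideal $I$ that is not a complete intersection such that for every variable $x$ dividing some generator of $I$, the ideal $I(x=1)$ obtained by substituting $x=1$ in the generators is a complete intersection. *)

(* Defs.v *)
From HB Require Import structures.
From mathcomp Require Import all_boot all_order all_algebra.
From mathcomp Require Import mpoly.
Set Implicit Arguments. Unset Strict Implicit. Unset Printing Implicit Defensive.
Import GRing.Theory.
Local Open Scope ring_scope.

Section Defs.
Variables (k : fieldType) (n : nat).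
Local Notation R := {mpoly k[n]}.

Definition ideal_of (s : seq R) : R -> Prop :=
  fun p => exists c : 'I_(size s) -> R, p = \sum_(i < size s) c i * s`_i.

Definition is_ideal (J : R -> Prop) : Prop :=
  [/\ J 0, (forall a b, J a -> J b -> J (a + b)) & (forall r a, J a -> J (r * a))].

Definition nzd_mod (J : R -> Prop) (a : R) : Prop :=
  forall b, J (a * b) -> J b.

Definition regular_seq (s : seq R) : Prop :=
  forall i, (i < size s)%N -> nzd_mod (ideal_of (take i s)) s`_i.

Definition complete_intersection (J : R -> Prop) : Prop :=
  exists s : seq R, regular_seq s /\ forall p, J p <-> ideal_of s p.

Definition mono (S : {set 'I_n}) : R := \prod_(i in S) 'X_i.

(* For a list G of squarefree monomials (given by their supports), the ideal
   generated by G is a nearly complete intersection: it is not a complete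
   intersection, and for every variable x_j dividing some generator, the ideal
   obtained by substituting x_j = 1 in the generators is a complete
   intersection. *)
Definition nearly_ci (G : seq {set 'I_n}) : Prop :=
  ~ complete_intersection (ideal_of (map mono G)) /\
  forall j : 'I_n, (exists2 S, S \in G & j \in S) ->
    complete_intersection (ideal_of (map (fun S => mono (S :\ j)) G)).

End Defs.

(* Main.v *)
Require Import Defs.
From HB Require Import structures.
From mathcomp Require Import all_boot all_order all_algebra.
From mathcomp Require Import mpoly.
Set Implicit Arguments. Unset Strict Implicit. Unset Printing Implicit Defensive.
Import GRing.Theory.
Local Open Scope ring_scope.

Section Gen.
Variables (k : fieldType) (n : nat).
Local Notation R := {mpoly k[n]}.

Definition genk (s : seq R) (m : nat) (p : R) :=
  exists c : nat -> R, p = \sum_(i < m) c i * s`_i.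

Lemma ideal_ofE (s : seq R) p : ideal_of s p <-> genk s (size s) p.
Proof.
split=> [[c ->]|[c ->]].
  exists (fun i => if (i < size s)%N =P true is ReflectT H then c (Ordinal H) else 0).
  apply: eq_bigr => i _; case: eqP => [H|]; last by rewrite ltn_ord.
  by rewrite (_ : Ordinal H = i) //; apply: val_inj.
by exists (fun i => c i).
Qed.

Lemma genk_take (s : seq R) m p : (m <= size s)%N -> ideal_of (take m s) p <-> genk s m p.
Proof.
move=> hm; rewrite ideal_ofE size_take_min (minn_idPl hm).
split=> -[c ->]; exists c; apply: eq_bigr => i _; by rewrite nth_take.
Qed.

Lemma genk0 s m : genk s m 0.
Proof. by exists (fun _ => 0); rewrite big1 // => i _; rewrite mul0r. Qed.

Lemma genkD s m a b : genk s m a -> genk s m b -> genk s m (a + b).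
Proof.
move=> [c ->] [d ->]; exists (fun i => c i + d i).
by rewrite -big_split; apply: eq_bigr => i _; rewrite mulrDl.
Qed.

Lemma genkM s m r a : genk s m a -> genk s m (r * a).
Proof.
move=> [c ->]; exists (fun i => r * c i).
by rewrite mulr_sumr; apply: eq_bigr => i _; rewrite mulrA.
Qed.

Lemma genkN s m a : genk s m a -> genk s m (- a).
Proof. by move=> h; rewrite -mulN1r; apply: genkM. Qed.

Lemma genkB s m a b : genk s m a -> genk s m b -> genk s m (a - b).
Proof. by move=> ha hb; apply: genkD => //; apply: genkN. Qed.

Lemma genk_nth s m i : (i < m)%N -> genk s m s`_i.
Proof.
move=> him; exists (fun j => (j == i)%:R).
rewrite (bigD1 (Ordinal him)) //= eqxx mul1r big1 ?addr0 // => j hj.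
by rewrite (_ : (val j == i) = false) ?mul0r //; apply/negbTE; apply: contra hj => /eqP h; apply/eqP/val_inj.
Qed.

Lemma genk_sum s m (I : Type) (r : seq I) (F : I -> R) :
  (forall i, genk s m (F i)) -> genk s m (\sum_(i <- r) F i).
Proof.
move=> h; elim: r => [|x r ih]; first by rewrite big_nil; apply: genk0.
by rewrite big_cons; apply: genkD.
Qed.

Lemma genk_mono s m1 m2 p : (m1 <= m2)%N -> genk s m1 p -> genk s m2 p.
Proof.
move=> hm [c ->]; exists (fun i => if (i < m1)%N then c i else 0).
rewrite -(subnKC hm) big_split_ord /= [X in _ + X]big1 ?addr0.
  by apply: eq_bigr => i _; rewrite ltn_ord.
by move=> i _; rewrite ltnNge leq_addr /= mul0r.
Qed.

Lemma genk_sub s m (J : R -> Prop) : @is_ideal k n J -> (forall i, (i < m)%N -> J s`_i) ->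
  forall p, genk s m p -> J p.
Proof.
move=> [J0 JD JM] hs p [c ->]; elim/big_ind: _ => //.
by move=> i _; apply: JM; apply: hs.
Qed.

Lemma ideal_of_is_ideal (s : seq R) : is_ideal (ideal_of s).
Proof.
split.
- by apply/ideal_ofE/genk0.
- by move=> a b /ideal_ofE ha /ideal_ofE hb; apply/ideal_ofE/genkD.
- by move=> r a /ideal_ofE ha; apply/ideal_ofE/genkM.
Qed.

Lemma fchoice (T : Type) (N : nat) (P : nat -> T -> Prop) :
  (forall j, (j < N)%N -> exists c, P j c) -> T ->
  exists F : nat -> T, forall j, (j < N)%N -> P j (F j).
Proof.
move=> h t0; elim: N h => [|N ih] h; first by exists (fun _ => t0).
have [F hF] := ih (fun j hj => h j (ltnW hj)).
have [c hc] := h N (ltnSn N).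
exists (fun j => if j == N then c else F j) => j hj.
case: eqP => [->//|/eqP ne]; apply: hF; by rewrite ltn_neqAle ne -ltnS.
Qed.

Lemma regular_rel (s : seq R) : regular_seq s ->
  forall m, (m <= size s)%N -> forall c : nat -> R,
  \sum_(i < m) c i * s`_i = 0 -> forall i, (i < m)%N -> genk s m (c i).
Proof.
move=> hreg; elim=> [|m ih] hm c hc i him //.
have hm' : (m <= size s)%N by apply: ltnW.
rewrite big_ord_recr /= in hc.
have hcm : genk s m (c m).
  apply/(genk_take _ hm'); apply: (hreg m hm).
  apply/(genk_take _ hm'); rewrite mulrC.
  have -> : c m * s`_m = - \sum_(i < m) c i * s`_i by apply/eqP; rewrite -addr_eq0 addrC hc.
  by apply: genkN; exists c.
have [d hd] := hcm.
have hrel : \sum_(i < m) (c i + d i * s`_m) * s`_i = 0.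
  rewrite -[RHS]hc (eq_bigr (fun j : 'I_m => c j * s`_j + d j * s`_m * s`_j)); last by move=> j _; rewrite mulrDl.
  rewrite big_split /=; congr (_ + _); rewrite hd mulr_suml.
  by apply: eq_bigr => j _; rewrite mulrAC.
have hsm : genk s m.+1 s`_m by apply: genk_nth.
case: (ltngtP i m) => [hi||->]; last 2 first.
- by move=> hmi; move: him; rewrite ltnS leqNgt hmi.
- exact: genk_mono (leqnSn m) hcm.
have := ih hm' (fun j => c j + d j * s`_m) hrel i hi => /(genk_mono (leqnSn m)) h1.
have -> : c i = (c i + d i * s`_m) - d i * s`_m by rewrite addrK.
by apply: genkB => //; apply: genkM.
Qed.

End Gen.


Section Mono.
Variables (k : fieldType) (n : nat).
Local Notation R := {mpoly k[n]}.

Definition mset (U : {set 'I_n}) : 'X_{1..n} := [multinom ((i \in U) : nat) | i < n].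

Lemma msetE U i : mset U i = (i \in U) :> nat.
Proof. by rewrite /mset mnmE. Qed.

Lemma monoE U : @mono k n U = 'X_[mset U].
Proof.
rewrite /mono mprodXE; congr (mpolyX _ _).
apply/mnmP => j; rewrite mnm_sumE msetE.
rewrite (eq_bigr (fun i => (i == j) : nat)); last by move=> i _; rewrite mnm1E.
case: (boolP (j \in U)) => hj.
  rewrite (bigD1 j) //= eqxx big1 // => i /andP [_ /negbTE ->] //.
by rewrite big1 // => i hi; case: eqP => // e; rewrite -e hi in hj.
Qed.

Lemma msetP (U : {set 'I_n}) (m : 'X_{1..n}) : reflect (forall i, i \in U -> (0 < m i)%N) (mset U <= m)%MM.
Proof.
apply: (iffP mnm_lepP) => h i; rewrite ?msetE.
  by move=> hi; have := h i; rewrite msetE hi.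
by case: (boolP (i \in U)) => // hi; apply: h.
Qed.

Lemma mset_subset U V : (mset U <= mset V)%MM = (U \subset V).
Proof.
apply/msetP/subsetP => h i hi; last by rewrite msetE h.
by have := h i hi; rewrite msetE; case: (i \in V).
Qed.

Lemma mset_inj : injective mset.
Proof.
move=> U V e; apply/eqP; rewrite eqEsubset -!mset_subset e.
by rewrite !lepm_refl.
Qed.

Lemma mcoeffMXif (q : R) m k' :
  (q * 'X_[m])@_k' = if (m <= k')%MM then q@_(k' - m) else 0.
Proof.
case: ifP => h.
  by rewrite -{1}(submK h) addmC mcoeffMX.
apply/eqP; rewrite mcoeff_eq0; apply/negP => hk.
have := perm_mem (msuppMX q m); move/(_ k') => e; rewrite e in hk.
by case/mapP: hk => m' _ em; rewrite em lem_addr in h.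
Qed.

Definition mideal (L : seq {set 'I_n}) (p : R) :=
  forall m, m \in msupp p -> exists2 U, U \in L & (mset U <= m)%MM.

Lemma mideal_is_ideal L : @is_ideal k n (mideal L).
Proof.
split.
- by move=> m; rewrite msupp0.
- move=> a b ha hb m /msuppD_le; rewrite mem_cat => /orP [] h; [exact: ha | exact: hb].
- move=> r a ha m /msuppM_le /allpairsP [[m1 m2] /= [_ h2 ->]].
  have [U hU le] := ha _ h2; exists U => //.
  apply: lepm_trans le _; exact: lem_addl.
Qed.

Lemma mideal_mono L U : U \in L -> mideal L (@mono k n U).
Proof. by move=> hU m; rewrite monoE msuppX inE => /eqP ->; exists U => //; apply: lepm_refl. Qed.

Lemma midealP L p : ideal_of (map (@mono k n) L) p <-> mideal L p.
Proof.
split.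
  move/ideal_ofE; apply: genk_sub; first exact: mideal_is_ideal.
  move=> i; rewrite size_map => hi; rewrite (nth_map set0) //.
  by apply: mideal_mono; apply: mem_nth.
move=> h; rewrite [p]mpolyE big_seq.
have [J0 JD JM] := ideal_of_is_ideal (map (@mono k n) L).
elim/big_ind: _ => // m hm.
have [U hU le] := h m hm.
have -> : p@_m *: 'X_[m] = (p@_m *: 'X_[m - mset U]) * @mono k n U.
  by rewrite monoE -scalerAl -mpolyXD submK.
apply: JM; apply/ideal_ofE.
have -> : @mono k n U = (map (@mono k n) L)`_(index U L).
  by rewrite (nth_map set0) ?index_mem // nth_index.
by apply: genk_nth; rewrite size_map index_mem.
Qed.

End Mono.


Section Min.
Variable (n : nat).
Local Notation sT := {set 'I_n}.

Definition minimal (Fam : seq sT) (U : sT) : bool :=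
  (U \in Fam) && all (fun V : sT => (V \subset U) ==> (V == U)) Fam.

Lemma minimalP (Fam : seq sT) U :
  minimal Fam U -> U \in Fam /\ forall V, V \in Fam -> V \subset U -> V = U.
Proof.
case/andP => hU /allP h; split => // V hV hs.
by apply/eqP; have := h V hV; rewrite hs.
Qed.

Lemma exists_min (Fam : seq sT) U : U \in Fam -> exists V, minimal Fam V /\ V \subset U.
Proof.
move: {2}#|U| (leqnn #|U|) => c; elim: c U => [|c ih] U hc hU.
  exists U; split => //; apply/andP; split => //; apply/allP => V hV.
  apply/implyP => hs; rewrite eqEsubset hs /=.
  by move: hc; rewrite leqn0 cards_eq0 => /eqP ->; apply: sub0set.
case: (boolP (minimal Fam U)) => hm; first by exists U.
have : ~~ all (fun V : sT => (V \subset U) ==> (V == U)) Fam by move: hm; rewrite /minimal hU.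
case/allPn => V hV; rewrite negb_imply => /andP [hs hne].
have hp : V \proper U by rewrite properEneq hne.
have hc' : (#|V| <= c)%N by rewrite -ltnS; apply: leq_trans (proper_card hp) hc.
have [W [hW hWV]] := ih V hc' hV.
by exists W; split => //; apply: subset_trans hWV hs.
Qed.

Definition minl (Fam : seq sT) := undup (filter (minimal Fam) Fam).

Lemma minl_uniq Fam : uniq (minl Fam).
Proof. exact: undup_uniq. Qed.

Lemma mem_minl Fam U : (U \in minl Fam) = minimal Fam U.
Proof. by rewrite mem_undup mem_filter; case: (boolP (minimal _ _)) => // /andP []. Qed.

Lemma minl_sub Fam U : U \in minl Fam -> U \in Fam.
Proof. by rewrite mem_minl => /andP []. Qed.

Lemma minl_anti Fam U W : U \in minl Fam -> W \in minl Fam -> U \subset W -> U = W.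
Proof.
rewrite !mem_minl => hU /minimalP [_ h] hs; apply: h => //.
by move: hU => /andP [].
Qed.

End Min.

Section MinIdeal.
Variables (k : fieldType) (n : nat).
Local Notation R := {mpoly k[n]}.

Lemma mideal_minl (Fam : seq {set 'I_n}) (p : R) : mideal Fam p <-> mideal (minl Fam) p.
Proof.
split => h m hm; have [U hU le] := h m hm.
  have [V [hV hVU]] := exists_min hU; exists V; first by rewrite mem_minl.
  by apply: lepm_trans le; rewrite mset_subset.
by exists U => //; apply: minl_sub.
Qed.

Lemma ideal_minl (Fam : seq {set 'I_n}) (p : R) :
  ideal_of (map (@mono k n) Fam) p <-> ideal_of (map (@mono k n) (minl Fam)) p.
Proof. by rewrite !midealP mideal_minl. Qed.

Lemma ci_ext (J J' : R -> Prop) : complete_intersection J -> (forall p, J p <-> J' p) ->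
  complete_intersection J'.
Proof. by move=> [s [hs he]] e; exists s; split => // p; rewrite -e. Qed.

Lemma mcoeff_monoM (U : {set 'I_n}) (b : R) m : (@mono k n U * b)@_(mset U + m) = b@_m.
Proof. by rewrite mulrC monoE mcoeffMX. Qed.

Lemma disj_regular (L : seq {set 'I_n}) : uniq L ->
  (forall U W, U \in L -> W \in L -> U <> W -> [disjoint U & W]) ->
  regular_seq (map (@mono k n) L).
Proof.
move=> hu hd i; rewrite size_map => hi b.
rewrite -map_take (nth_map set0) // !midealP => h m hm.
set U := nth set0 L i.
have hm' : (mset U + m)%MM \in msupp (@mono k n U * b) by rewrite mcoeff_msupp mcoeff_monoM -mcoeff_msupp.
have [V hV le] := h _ hm'.
have hUV : U <> V.
  move=> e; have : uniq (take i L ++ drop i L) by rewrite cat_take_drop.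
  rewrite cat_uniq => /and3P [_ /hasPn hn _].
  have hUd : U \in drop i L.
    by have := @mem_nth _ set0 (drop i L) 0; rewrite nth_drop addn0 size_drop subn_gt0 => /(_ hi).
  by have := hn _ hUd; rewrite e hV.
have hdisj := hd U V (mem_nth set0 hi) (mem_take hV) hUV.
exists V => //; apply/msetP => x hx; move/msetP: le => /(_ x hx).
rewrite mnmDE msetE.
case: (boolP (x \in U)) => //= hxU.
by rewrite (disjointFr hdisj hxU) in hx.
Qed.

Lemma disj_ci (L : seq {set 'I_n}) : uniq L ->
  (forall U W, U \in L -> W \in L -> U <> W -> [disjoint U & W]) ->
  complete_intersection (ideal_of (map (@mono k n) L)).
Proof. by move=> hu hd; exists (map (@mono k n) L); split => //; apply: disj_regular. Qed.

Lemma ideal1P (h p : R) : ideal_of [:: h] p <-> exists c, p = c * h.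
Proof.
rewrite ideal_ofE; split => -[c ->]; first by exists (c 0%N); rewrite big_ord1.
by exists (fun _ => c); rewrite big_ord1.
Qed.

Lemma colon (G : seq {set 'I_n}) (S : {set 'I_n}) (p : R) :
  (ideal_of [:: @mono k n S] p /\ ideal_of (map (@mono k n) (rem S G)) p) <->
  (exists2 q, mideal (map (fun A => A :\: S) (rem S G)) q & p = @mono k n S * q).
Proof.
rewrite ideal1P midealP; split.
  move=> [[c ->] hK]; exists c => //; last by rewrite mulrC.
  move=> m hm.
  have hm' : (mset S + m)%MM \in msupp (c * @mono k n S).
    by rewrite mulrC mcoeff_msupp mcoeff_monoM -mcoeff_msupp.
  have [A hA le] := hK _ hm'.
  exists (A :\: S); first by apply: map_f.
  apply/msetP => x; rewrite inE => /andP [hxS hxA].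
  by move/msetP: le => /(_ x hxA); rewrite mnmDE msetE (negbTE hxS).
move=> [q hq ->]; split; first by exists q; rewrite mulrC.
move=> m; rewrite monoE mulrC mcoeff_msupp mcoeffMXif.
case: ifP => hle; last by rewrite eqxx.
rewrite -mcoeff_msupp => hm.
have [X /mapP [A hA ->] le] := hq _ hm.
exists A => //; apply/msetP => x hx.
rewrite -(submK hle) mnmDE msetE.
case: (boolP (x \in S)) => hxS; first by rewrite addn1.
by move/msetP: le => /(_ x); rewrite inE hxS hx => /(_ isT); rewrite addn0.
Qed.

End MinIdeal.


Section Hard.
Variables (k : fieldType) (n : nat).
Local Notation R := {mpoly k[n]}.

Lemma mcoeff0M (p q : R) : (p * q)@_0 = p@_0 * q@_0.
Proof. exact: rmorphM. Qed.

Lemma mcoeff0_sum (I : Type) (r : seq I) (F : I -> R) : (\sum_(i <- r) F i)@_0 = \sum_(i <- r) (F i)@_0.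
Proof. exact: raddf_sum. Qed.

Lemma msetU (A B : {set 'I_n}) : [disjoint A & B] -> mset (A :|: B) = (mset A + mset B)%MM.
Proof.
move=> hd; apply/mnmP => x; rewrite mnmDE !msetE inE.
case: (boolP (x \in A)) => hA //=; by rewrite (disjointFr hd hA).
Qed.

Lemma monoU (A B : {set 'I_n}) : [disjoint A & B] -> @mono k n (A :|: B) = mono k A * mono k B.
Proof. by move=> hd; rewrite !monoE msetU // mpolyXD. Qed.

Lemma meval_mono (v : 'I_n -> k) (A : {set 'I_n}) : (@mono k n A).@[v] = \prod_(i in A) v i.
Proof. rewrite /mono rmorph_prod; apply: eq_bigr => i _; exact: mevalXU. Qed.

Lemma subm_id (m : 'X_{1..n}) : (m - m)%MM = 0%MM.
Proof. by apply/mnmP => x; rewrite mnmBE subnn mnm0E. Qed.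


Lemma disjD (A B : {set 'I_n}) : [disjoint A & B :\: A].
Proof. by rewrite -setI_eq0; apply/eqP/setP => x; rewrite !inE; case: (x \in A); rewrite ?andbF. Qed.

Lemma setUD' (A B : {set 'I_n}) : A :|: (B :\: A) = A :|: B.
Proof. by apply/setP => x; rewrite !inE; case: (x \in A). Qed.

Lemma mono_syz (A B : {set 'I_n}) : @mono k n A * mono k (B :\: A) = mono k B * mono k (A :\: B).
Proof. by rewrite -!monoU ?disjD // !setUD' setUC. Qed.

Lemma hard (L : seq {set 'I_n}) : uniq L ->
  (forall U W, U \in L -> W \in L -> U \subset W -> U = W) ->
  complete_intersection (ideal_of (map (@mono k n) L)) ->
  forall U W, U \in L -> W \in L -> U <> W -> [disjoint U & W].
Proof.
move=> hu ha [s [hreg hI]] U W hU hW hne; apply/idPn => hmeet.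
set N := size L; set r := size s.
pose Ls i := nth set0 L i.
pose mL i := @mono k n (Ls i).
have hmLn : forall t, (t < N)%N -> (map (@mono k n) L)`_t = mL t.
  by move=> t ht; rewrite (nth_map set0).
have Lsinj : forall a b, (a < N)%N -> (b < N)%N -> Ls a = Ls b -> a = b.
  by move=> a b ha' hb' e; apply/eqP; rewrite -(nth_uniq set0 ha' hb' hu); apply/eqP.
have [F hF] : exists F : nat -> nat -> R, forall j, (j < N)%N ->
    mL j = \sum_(l < r) F j l * s`_l.
  refine (@fchoice (nat -> R) N (fun j c => mL j = \sum_(l < r) c l * s`_l) _ (fun _ => 0)).
  move=> j hj.
  have : ideal_of (map (@mono k n) L) (mL j).
    apply/ideal_ofE; rewrite -hmLn //; apply: genk_nth; by rewrite size_map.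
  by move/hI/ideal_ofE => [c hc]; exists c.
have [E hE] : exists E : nat -> nat -> R, forall i, (i < r)%N ->
    s`_i = \sum_(t < N) E i t * mL t.
  refine (@fchoice (nat -> R) r (fun i c => s`_i = \sum_(t < N) c t * mL t) _ (fun _ => 0)).
  move=> i hi.
  have : ideal_of s s`_i by apply/ideal_ofE; apply: genk_nth.
  move/hI/ideal_ofE => [c hc]; exists c; rewrite hc size_map.
  by apply: eq_bigr => t _; rewrite hmLn.
have hA : forall a b, (a < N)%N -> (b < N)%N ->
    (\sum_(l < r) F a l * E l b)@_0 = (a == b)%:R.
  move=> a b ha' hb'.
  have e : mL a = \sum_(t < N) (\sum_(l < r) F a l * E l t) * mL t.
    rewrite {1}hF // (eq_bigr (fun l : 'I_r => \sum_(t < N) F a l * E l t * mL t)); last first.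
      by move=> l _; rewrite hE // mulr_sumr; apply: eq_bigr => t _; rewrite mulrA.
    rewrite exchange_big /=; apply: eq_bigr => t _; by rewrite mulr_suml.
  have e2 : (mL a)@_(mset (Ls b)) = \sum_(t < N) ((\sum_(l<r) F a l * E l t) * mL t)@_(mset (Ls b)).
    by rewrite {1}e; apply: raddf_sum.
  rewrite (bigD1 (Ordinal hb')) //= [X in _ + X]big1 in e2; last first.
    move=> t /eqP hneq; rewrite /mL monoE mcoeffMXif mset_subset.
    case: ifP => // hs; exfalso; apply: hneq; apply: val_inj => /=.
    by apply: Lsinj => //; apply: ha => //; apply: mem_nth.
  move: e2; rewrite /mL !monoE mcoeffX mcoeffMXif lepm_refl subm_id addr0 => <-.
  have -> : (mset (Ls a) == mset (Ls b)) = (a == b) by apply/idP/idP => [/eqP/mset_inj/(Lsinj _ _ ha' hb') -> // | /eqP -> //].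
  done.
have hB : forall i l, (i < r)%N -> (l < r)%N ->
    genk s r (\sum_(t < N) E i t * F t l - (i == l)%:R).
  move=> i l hi hl.
  apply: (@regular_rel _ _ s hreg r (leqnn r) (fun l' => \sum_(t < N) E i t * F t l' - (i == l')%:R) _ l hl).
  rewrite (eq_bigr (fun l' : 'I_r => (\sum_(t < N) E i t * F t l') * s`_l' - (i == l')%:R * s`_l')); last by move=> l' _; rewrite mulrBl.
  rewrite sumrB; apply/eqP; rewrite subr_eq0; apply/eqP.
  rewrite [RHS](bigD1 (Ordinal hi)) //= eqxx mul1r [X in _ + X]big1 ?addr0; last first.
    move=> l' /eqP hne'; case: eqP => [e|_]; last by rewrite mul0r.
    by exfalso; apply: hne'; apply: val_inj.
  rewrite (eq_bigr (fun l' : 'I_r => \sum_(t < N) E i t * (F t l' * s`_l'))); last first.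
    by move=> l' _; rewrite mulr_suml; apply: eq_bigr => t _; rewrite mulrA.
  rewrite exchange_big /= hE //; apply: eq_bigr => t _.
  by rewrite -mulr_sumr -hF.
set j := index U L; set u := index W L.
have hj : (j < N)%N by rewrite index_mem.
have hu' : (u < N)%N by rewrite index_mem.
have hLj : Ls j = U by rewrite /Ls nth_index.
have hLu : Ls u = W by rewrite /Ls nth_index.
have hC : forall l, (l < r)%N ->
    genk s r (F j l * mono k (W :\: U) - F u l * mono k (U :\: W)).
  move=> l hl.
  apply: (@regular_rel _ _ s hreg r (leqnn r) (fun l' => F j l' * mono k (W :\: U) - F u l' * mono k (U :\: W)) _ l hl).
  rewrite (eq_bigr (fun l' : 'I_r => mono k (W :\: U) * (F j l' * s`_l') - mono k (U :\: W) * (F u l' * s`_l'))); last first.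
    by move=> l' _; rewrite mulrBl ![mono k _ * (_ * _)]mulrA ![mono k _ * F _ _]mulrC.
  rewrite sumrB -!mulr_sumr -hF // -hF // /mL hLj hLu.
  by rewrite mulrC mono_syz mulrC subrr.
pose v : 'I_n -> k := fun x => if x \in W :\: U then 1 else 0.
have hv0 : forall A : {set 'I_n}, ~~ (A \subset W :\: U) -> (mono k A).@[v] = 0.
  move=> A /subsetPn [x hx hnx]; rewrite meval_mono (bigD1 x) //= /v (negbTE hnx) mul0r //.
have hvan : forall q, genk s r q -> q.@[v] = 0.
  move=> q hq; have : ideal_of (map (@mono k n) L) q by apply/hI/ideal_ofE.
  move/ideal_ofE => [c ->]; rewrite rmorph_sum big1 // => t _.
  have ht : (t < N)%N by case: t => t /=; rewrite size_map.
  rewrite rmorphM /= hmLn // hv0 ?mulr0 //; apply/negP => hs.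
  have hsW : Ls t \subset W by apply: subset_trans hs _; apply: subsetDl.
  have e : Ls t = W by apply: ha => //; apply: mem_nth.
  move: hs hmeet; rewrite e => /subsetP hs /negP; apply.
  rewrite -setI_eq0; apply/eqP/setP => x; rewrite !inE.
  by case hxW: (x \in W); rewrite ?andbF //; have := hs x hxW; rewrite !inE hxW andbT => /negbTE ->.
have hFj : forall l, (l < r)%N -> (F j l).@[v] = 0.
  move=> l hl; have := hvan _ (hC l hl).
  rewrite rmorphB !rmorphM /=.
  have -> : (mono k (W :\: U)).@[v] = 1.
    by rewrite meval_mono big1 // => x hx; rewrite /v hx.
  have -> : (mono k (U :\: W)).@[v] = 0.
    apply: hv0; apply/negP => hs.
    have hUW : ~~ (U \subset W) by apply/negP => hs'; apply: hne; apply: ha.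
    case/subsetPn: hUW => x hxU hxW.
    by have := subsetP hs x; rewrite !inE hxU hxW /= => /(_ isT).
  by rewrite mulr1 mulr0 subr0.
pose F0 : 'M[k]_(N, r) := \matrix_(a, b) (F a b)@_0.
pose E0 : 'M[k]_(r, N) := \matrix_(a, b) (E a b)@_0.
pose Fp : 'M[k]_(N, r) := \matrix_(a, b) (F a b).@[v].
pose Ep : 'M[k]_(r, N) := \matrix_(a, b) (E a b).@[v].
have h0 : F0 *m E0 = 1%:M.
  apply/matrixP => a b; rewrite !mxE.
  under eq_bigr do rewrite !mxE.
  rewrite -[RHS]/((a : nat) == b)%:R -(hA a b (ltn_ord a) (ltn_ord b)) raddf_sum.
  by apply: eq_bigr => l _; rewrite -mcoeff0M.
have hp : Ep *m Fp = 1%:M.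
  apply/matrixP => a b; rewrite !mxE.
  under eq_bigr do rewrite !mxE.
  have := hvan _ (hB a b (ltn_ord a) (ltn_ord b)).
  rewrite rmorphB rmorph_sum rmorph_nat /= => /eqP; rewrite subr_eq0 => /eqP <-.
  by apply: eq_bigr => t _; rewrite rmorphM.
have hNr : (N <= r)%N.
  by rewrite -{1}(mxrank1 k N) -h0; apply: leq_trans (mxrankM_maxl _ _) (rank_leq_col _).
have hrF : (r <= \rank Fp)%N by rewrite -{1}(mxrank1 k r) -hp; apply: mxrankM_maxr.
have hfree : row_free Fp.
  by rewrite /row_free eqn_leq rank_leq_row /=; apply: leq_trans hNr hrF.
have := @row_free_inj _ 1 _ _ _ hfree (delta_mx 0 (Ordinal hj)) 0.
rewrite mul0mx -rowE.
have -> : row (Ordinal hj) Fp = 0 by apply/matrixP => a b; rewrite !mxE hFj.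
move=> /(_ erefl) /matrixP /(_ 0 (Ordinal hj)); rewrite !mxE !eqxx /=.
by move/eqP; rewrite oner_eq0.
Qed.

End Hard.


Section Comb.
Variable (n : nat).
Local Notation sT := {set 'I_n}.

Lemma minimalI (Fam : seq sT) U : U \in Fam -> (forall V, V \in Fam -> V \subset U -> V = U) ->
  minimal Fam U.
Proof.
move=> hU h; rewrite /minimal hU /=; apply/allP => V hV; apply/implyP => hs.
by rewrite (h V hV hs).
Qed.

Lemma three (S : sT) : (2 < #|S|)%N -> exists a b c,
  [/\ a \in S, b \in S, c \in S & [/\ a != b, a != c & b != c]].
Proof.
rewrite cardE; have hu := enum_uniq (mem S); have hm := mem_enum (mem S).
move: hu hm; case: (enum (mem S)) => [|a [|b [|c rest]]] //= hu hm _.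
exists a, b, c; rewrite -!hm !inE !eqxx ?orbT; split => //.
move: hu; rewrite !inE !negb_or => /and4P [/and3P [hab hac _] /andP [hbc _] _ _].
by split.
Qed.

Variables (G : seq sT) (S : sT).
Hypothesis huG : uniq G.
Hypothesis hanti : forall A B, A \in G -> B \in G -> A \subset B -> A = B.
Hypothesis hS : S \in G.
Definition Gj (j : 'I_n) := map (fun A => A :\ j) G.
Hypothesis HD : forall j, j \in S -> forall U W, minimal (Gj j) U -> minimal (Gj j) W ->
  U <> W -> [disjoint U & W].
Hypothesis S2 : forall j, j \in S -> exists2 x, x \in S & x != j.

Definition Fl := map (fun A => A :\: S) (rem S G).

Lemma memF X : X \in Fl -> exists A, [/\ A \in G, A <> S & X = A :\: S].
Proof.
case/mapP => A; rewrite mem_rem_uniq // inE => /andP [hne hA] ->.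
by exists A; split => //; apply/eqP.
Qed.

Lemma memF' A : A \in G -> A <> S -> A :\: S \in Fl.
Proof. by move=> hA hne; apply: map_f; rewrite mem_rem_uniq // inE hA andbT; apply/eqP. Qed.

Lemma Sj_min j : j \in S -> minimal (Gj j) (S :\ j).
Proof.
move=> hj; apply: minimalI; first by apply: map_f.
move=> V /mapP [D hD ->] hs.
have hDS : D \subset S.
  apply/subsetP => x hx; case: (eqVneq x j) => [->//|hxj].
  by have := subsetP hs x; rewrite !inE hxj hx => /(_ isT) /andP [].
by rewrite (hanti hD hS hDS).
Qed.

Lemma min_good X j : minimal Fl X -> j \in S -> X \in Gj j -> minimal (Gj j) X.
Proof.
move=> /minimalP [hX hmin] hj hXj; apply: minimalI => // V /mapP [D hD ->] hs.
have [A [hA hAS eX]] := memF hX.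
case: (eqVneq D S) => [eD|hDS].
  exfalso; have [x hx hxj] := S2 hj.
  have := subsetP hs x; rewrite eD !inE hxj hx eX !inE hx /= => /(_ isT).
  done.
have hsub : D :\: S \subset X.
  apply: subset_trans hs; apply/subsetP => x; rewrite !inE => /andP [hxS ->].
  by rewrite andbT; apply: contraNneq hxS => ->.
have e := hmin _ (memF' hD (elimN eqP hDS)) hsub.
apply/eqP; rewrite eqEsubset hs /= -{1}e.
apply/subsetP => x; rewrite !inE => /andP [hxS ->]; rewrite andbT.
by apply: contraNneq hxS => ->.
Qed.

Lemma good_f X A j i : minimal Fl X -> A \in G -> A <> S -> X = A :\: S ->
  j \in S -> i \in S -> i \notin A -> i != j -> X \in Gj j.
Proof.
move=> /minimalP [hX hmin] hA hAS eX hj hi hiA hij.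
have hAj : A :\ j \in Gj j by apply: map_f.
have [Z [hZ hZA]] := exists_min hAj.
have [hZin _] := minimalP hZ.
have [D hD eZ] := mapP hZin.
have hZS : Z <> S :\ j.
  move=> e; have := subsetP hZA i; rewrite e !inE hij hi (negbTE hiA) /=.
  by move/(_ isT).
have hd := HD hj hZ (Sj_min hj) hZS.
have hZS0 : forall x, x \in Z -> x \notin S.
  move=> x hx; apply/negP => hxS.
  have hxj : x != j by move: hx; rewrite eZ !inE => /andP [].
  by have := disjointFr hd hx; rewrite !inE hxj hxS.
have hDS : D <> S.
  move=> e; move: hZS; rewrite eZ e; done.
have hsub1 : D :\: S \subset Z.
  apply/subsetP => x; rewrite !inE eZ !inE => /andP [hxS ->]; rewrite andbT.
  by apply: contraNneq hxS => ->.
have hsub2 : Z \subset X.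
  apply/subsetP => x hx; rewrite eX !inE (negbTE (hZS0 x hx)) /=.
  by have := subsetP hZA x hx; rewrite !inE => /andP [].
have e := hmin _ (memF' hD hDS) (subset_trans hsub1 hsub2).
have eZX : Z = X by apply/eqP; rewrite eqEsubset hsub2 -{1}e hsub1.
by rewrite -eZX.
Qed.

Lemma one_bad X j1 j2 : minimal Fl X -> j1 \in S -> j2 \in S ->
  X \notin Gj j1 -> X \notin Gj j2 -> j1 = j2.
Proof.
move=> hX h1 h2 b1 b2.
have [hXF _] := minimalP hX.
have [A [hA hAS eX]] := memF hXF.
have [i hiS hiA] : exists2 i, i \in S & i \notin A.
  apply/exists_inP; rewrite -negb_forall_in; apply/negP => /forall_inP h.
  by apply: hAS; symmetry; apply: hanti => //; apply/subsetP.
have ei : forall j, j \in S -> X \notin Gj j -> i = j.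
  move=> j hj bj; apply/eqP; apply: contraNT bj => hij.
  exact: (good_f hX hA hAS eX hj hiS hiA hij).
by rewrite -(ei _ h1 b1) (ei _ h2 b2).
Qed.

Lemma Fdisj X Y : (2 < #|S|)%N -> minimal Fl X -> minimal Fl Y -> X <> Y -> [disjoint X & Y].
Proof.
move=> h3 hX hY hXY.
have [a [b [c [ha hb hc [hab hac hbc]]]]] := three h3.
have [j [hj gX gY]] : exists j, [/\ j \in S, X \in Gj j & Y \in Gj j].
  case: (boolP (X \in Gj a)) => xa; case: (boolP (Y \in Gj a)) => ya.
  - by exists a.
  -
    have yb : Y \in Gj b by apply: contraNT hab => yb; apply/eqP; apply: (one_bad hY).
    have yc : Y \in Gj c by apply: contraNT hac => yc; apply/eqP; apply: (one_bad hY).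
    case: (boolP (X \in Gj b)) => xb; first by exists b.
    have xc : X \in Gj c by apply: contraNT hbc => xc; apply/eqP; apply: (one_bad hX).
    by exists c.
  - have xb : X \in Gj b by apply: contraNT hab => xb; apply/eqP; apply: (one_bad hX).
    have xc : X \in Gj c by apply: contraNT hac => xc; apply/eqP; apply: (one_bad hX).
    case: (boolP (Y \in Gj b)) => yb; first by exists b.
    have yc : Y \in Gj c by apply: contraNT hbc => yc; apply/eqP; apply: (one_bad hY).
    by exists c.
  - have xb : X \in Gj b by apply: contraNT hab => xb; apply/eqP; apply: (one_bad hX).
    have xc : X \in Gj c by apply: contraNT hac => xc; apply/eqP; apply: (one_bad hX).
    have yb : Y \in Gj b by apply: contraNT hab => yb; apply/eqP; apply: (one_bad hY).
    by exists b.
have h1 := min_good hX hj gX. have h2 := min_good hY hj gY. have := HD hj h1 h2 hXY. done.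
Qed.

End Comb.


Lemma ci_min_disj (k : fieldType) (n : nat) (Fam : seq {set 'I_n}) :
  complete_intersection (ideal_of (map (@mono k n) Fam)) ->
  forall U W, minimal Fam U -> minimal Fam W -> U <> W -> [disjoint U & W].
Proof.
move=> hci U W hU hW hne.
have hci' := ci_ext hci (ideal_minl (k := k) Fam).
have hA : forall A B : {set 'I_n}, A \in minl Fam -> B \in minl Fam -> A \subset B -> A = B.
  move=> A B hA1 hB1 hs; exact: (minl_anti hA1 hB1 hs).
have hU' : U \in minl Fam by rewrite mem_minl.
have hW' : W \in minl Fam by rewrite mem_minl.
exact: (@hard k n (minl Fam) (minl_uniq Fam) hA hci' U W hU' hW' hne).
Qed.

Theorem theorem4p4 (k : fieldType) (n : nat) (G : seq {set 'I_n})
    (S : {set 'I_n}) :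
  uniq G ->
  (forall A B, A \in G -> B \in G -> A \subset B -> A = B) ->
  @nearly_ci k n G ->
  S \in G -> (3 <= #|S|)%N ->
  exists J : {mpoly k[n]} -> Prop,
    [/\ is_ideal J, complete_intersection J &
        forall p : {mpoly k[n]},
          (ideal_of [:: @mono k n S] p /\ ideal_of (map (@mono k n) (rem S G)) p) <->
          (exists2 q, J q & p = @mono k n S * q)].
Proof.
move=> huG hanti [_ hnci] hS h3.
have HD : forall j, j \in S -> forall U W, minimal (Gj G j) U -> minimal (Gj G j) W ->
    U <> W -> [disjoint U & W].
  move=> j hj; apply: (ci_min_disj (k := k)).
  have := hnci j (ex_intro2 _ _ S hS hj).
  by rewrite /Gj -map_comp.
have S2 : forall j, j \in S -> exists2 x, x \in S & x != j.
  move=> j hj; have [a [b [c [ha hb hc [hab hac hbc]]]]] := three h3.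
  case: (eqVneq a j) => [eaj|]; last by exists a.
  by exists b => //; rewrite -eaj eq_sym.
exists (ideal_of (map (@mono k n) (minl (Fl G S)))); split.
- exact: ideal_of_is_ideal.
- apply: disj_ci; first exact: minl_uniq.
  move=> U W hU hW hne; rewrite !mem_minl in hU hW.
  exact: (Fdisj huG hanti hS HD S2 h3 hU hW hne).
- move=> p; rewrite colon; split => -[q hq ->]; exists q => //.
    by apply/midealP; apply: (proj1 (mideal_minl (k := k) (Fl G S) q)); exact: hq.
  by apply: (proj2 (mideal_minl (k := k) (Fl G S) q)); apply/midealP; exact: hq.
Qed.
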